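(* Let $G$ be a graph with vertex set $V(G)=\{u_1,\ldots,u_n\}$ and let $H_1,\ldots,H_n$ be pairwise disjoint graphs such that at least one of the $H_i$ is not a complete graph. Let $M=\max\Big\{\sum_{j=1}^k box(H_{i_j}) : \{u_{i_1},\ldots,u_{i_k}\}\text{ is a clique in } G \text{ and each } H_{i_j} \text{ is not a complete graph}\Big\}.$ Then $M\leq box(G[H_1,H_2,\ldots,H_n])\leq \sum_{i=1}^n box(H_i)$.
   Context: All graphs are simple, finite and undirected. For a graph $G$ with vertex set $\{u_1,\ldots,u_n\}$ and pairwise disjoint graphs $H_1,\ldots,H_n$, the $G$-generalized join $G[H_1,\ldots,H_n]$ is the graph obtained from $G$ by replacing each vertex $u_i$ by $H_i$ and joining every vertex of $H_i$ to every vertex of $H_j$ whenever $u_i$ is adjacent to $u_j$ in $G$ (no other edges between different $H_i$'s). An $\ell$-box is a Cartesian product of $\ell$ closed bounded real intervals; the boxicity $box(G)$ of a graph $G$ is the least positive integer $\ell$ such that $G$ is isomorphic to the intersection graph of a family of $\ell$-boxes. A clique in $G$ is a set of pairwise adjacent vertices (a single vertex is a clique). *)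

(* Defs.v *)
From Stdlib Require Import Reals.
From mathcomp Require Import all_boot.
From mathcomp Require Import boolp.

Set Implicit Arguments.
Unset Strict Implicit.
Unset Printing Implicit Defensive.

Definition simple_graph (T : Type) (e : rel T) : Prop :=
  symmetric e /\ irreflexive e.

Definition complete_graph (T : Type) (e : rel T) : Prop :=
  forall x y : T, x <> y -> e x y.

Definition clique (T : finType) (e : rel T) (C : {set T}) : Prop :=
  forall x y, x \in C -> y \in C -> x <> y -> e x y.

(* An l-box is given by lower/upper corners lo <= hi coordinatewise;
   e is (isomorphic to) the intersection graph of the family of l-boxes
   (lo x, hi x)_{x : T}: distinct x, y are adjacent iff their boxes meet. *)
Definition box_rep (T : Type) (e : rel T) (l : nat) : Prop :=
  exists lo hi : T -> 'I_l -> R,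
    (forall x k, Rle (lo x k) (hi x k)) /\
    (forall x y, x <> y ->
       (e x y <->
        exists p : 'I_l -> R, forall k,
          (Rle (lo x k) (p k) /\ Rle (p k) (hi x k)) /\
          (Rle (lo y k) (p k) /\ Rle (p k) (hi y k)))).

Definition box_pred (T : Type) (e : rel T) : pred nat :=
  fun l => `[< (0 < l)%N /\ box_rep e l >].

(* boxicity: least positive l admitting a box representation
   (0 by convention if none exists, which never happens for finite graphs). *)
Definition boxicity (T : Type) (e : rel T) : nat :=
  match pselect (exists l, box_pred e l) with
  | left h => ex_minn h
  | right _ => 0
  end.

Definition gjoin (V : finType) (g : rel V) (H : V -> finType)
    (h : forall v, rel (H v)) : rel {v : V & H v} :=
  fun x y =>
    if tag x == tag y then h (tag x) (tagged x) (tagged_as x y)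
    else g (tag x) (tag y).

(* Main.v *)
Require Import Defs.
From Stdlib Require Import Reals Lra Classical.
From mathcomp Require Import all_boot.
From mathcomp Require Import boolp.
Set Implicit Arguments. Unset Strict Implicit. Unset Printing Implicit Defensive.

Definition meetR (a b c d : R) : Prop := (Rle (a) (d)) /\ (Rle (c) (b)).

Lemma common_point (I : Type) (lo hi lo' hi' : I -> R) :
  (forall k, (Rle (lo k) (hi k))) -> (forall k, (Rle (lo' k) (hi' k))) ->
  ((exists p : I -> R, forall k,
      (Rle (lo k) (p k) /\ Rle (p k) (hi k)) /\
      (Rle (lo' k) (p k) /\ Rle (p k) (hi' k))) <->
   forall k, meetR (lo k) (hi k) (lo' k) (hi' k)).
Proof.
move=> H1 H2; split.
  by case=> p Hp k; have := Hp k; rewrite /meetR; lra.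
move=> Hm; exists (fun k => Rmax (lo k) (lo' k)) => k.
have := Hm k; have := H1 k; have := H2 k; rewrite /meetR.
have := Rmax_l (lo k) (lo' k); have := Rmax_r (lo k) (lo' k).
case: (Rmax_Rle (lo k) (lo' k) (hi k)) => _ _.
destruct (Rle_dec (lo k) (lo' k)).
  rewrite Rmax_right //; lra.
rewrite Rmax_left; lra.
Qed.

Definition mrep (T : Type) (e : rel T) (I : Type) (lo hi : T -> I -> R) :=
  (forall x k, (Rle (lo x k) (hi x k))) /\
  (forall x y, x <> y -> (e x y <-> forall k, meetR (lo x k) (hi x k) (lo y k) (hi y k))).

Lemma box_rep_mrep (T : Type) (e : rel T) l :
  box_rep e l <-> exists lo hi, @mrep T e 'I_l lo hi.
Proof.
split; case=> lo [hi [H1 H2]]; exists lo, hi; split=> // x y xy.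
  by rewrite -common_point //; apply: H2.
by rewrite common_point //; apply: H2.
Qed.

Lemma mrep_fin (T : Type) (e : rel T) (I : finType) lo hi :
  @mrep T e I lo hi -> box_rep e #|I|.
Proof.
case=> H1 H2; apply/box_rep_mrep.
exists (fun x i => lo x (enum_val i)), (fun x i => hi x (enum_val i)); split=> // x y xy.
rewrite H2 //; split=> H k; first exact: H.
by rewrite -(enum_rankK k); apply: H.
Qed.

Lemma boxicity_le (T : Type) (e : rel T) l : (0 < l)%N -> box_rep e l -> (boxicity e <= l)%N.
Proof.
move=> l0 br; have bp : box_pred e l by apply/asboolP.
rewrite /boxicity; case: pselect => [ex|nex]; last by exfalso; apply: nex; exists l.
by case: ex_minnP => m _ /(_ _ bp).
Qed.

Lemma boxicity_rep (T : Type) (e : rel T) :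
  (exists l, (0 < l)%N /\ box_rep e l) -> (0 < boxicity e)%N /\ box_rep e (boxicity e).
Proof.
case=> l [l0 br]; have bp : box_pred e l by apply/asboolP.
rewrite /boxicity; case: pselect => [ex|nex]; last by exfalso; apply: nex; exists l.
by case: ex_minnP => m /asboolP.
Qed.
Lemma mrep_exists (T : finType) (e : rel T) : symmetric e ->
  exists lo hi, @mrep T e (option (T * T)) lo hi.
Proof.
move=> se.
pose c (k : option (T * T)) := if k is Some (a, b) then (a != b) && ~~ e a b else false.
exists (fun x k => if k is Some (a, b) then (if c k then (if x == b then R1 else R0) else R0) else R0).
exists (fun x k => if k is Some (a, b) then (if c k then (if x == a then R0 else R1) else R1) else R1).
split.
  move=> x [[a b]|] /=; last lra.
  case: ifP => [/andP[ab _]|_]; last lra.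
  case: eqP => [xb|_]; case: eqP => [xa|_]; try lra.
  by rewrite -xb -xa eqxx in ab.
move=> x y xy; split.
  move=> exy [[a b]|] /=; rewrite /meetR; last lra.
  case: ifP => [/andP[ab neab]|_]; last lra.
  do 4 (case: eqP => ?); subst; try lra; try by rewrite eqxx in ab.
  - by rewrite se exy in neab.
  - by rewrite exy in neab.
move=> H; apply/negPn/negP => nexy.
have := H (Some (x, y)); rewrite /= /meetR.
have -> : (x != y) && ~~ e x y by apply/andP; split => //; apply/eqP.
rewrite !eqxx; case: eqP => // _; lra.
Qed.
Lemma fin_bound (X : finType) (f : X -> R) : exists M, Rle 0 M /\ forall x, Rle (f x) M.
Proof.
exists (foldr (fun x m => Rmax (f x) m) R0 (enum X)); split.
  elim: (enum X) => [|x s IH] /=; first lra.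
  apply: Rle_trans IH (Rmax_r _ _).
move=> x; have : x \in enum X by rewrite mem_enum.
elim: (enum X) => [|y s IH] //=; rewrite in_cons => /orP[/eqP ->|xs].
  exact: Rmax_l.
exact: Rle_trans (IH xs) (Rmax_r _ _).
Qed.

Lemma mrep_bound (T : finType) (I : finType) (lo hi : T -> I -> R) :
  exists M, Rle 0 M /\ forall x k, Rle (- M) (lo x k) /\ Rle (hi x k) M.
Proof.
have [M [M0 HM]] := fin_bound (fun p : T * I => Rplus (Rabs (lo p.1 p.2)) (Rabs (hi p.1 p.2))).
exists M; split => // x k; have := HM (x, k) => /=.
have := Rabs_pos (lo x k); have := Rabs_pos (hi x k).
have := Rle_abs (hi x k); have := Rle_abs (lo x k).
have := Rle_abs (- lo x k); rewrite Rabs_Ropp; lra.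
Qed.

Section Proj.
Variables (V : finType) (H : V -> finType).
Definition proj (i : V) (z : {j : V & H j}) : option (H i) :=
  match z with existT j a => if j =P i is ReflectT e then Some (eq_rect j H a i e) else None end.
Lemma projE i a : proj i (existT _ i a) = Some a.
Proof. by rewrite /proj; case: eqP => // e; rewrite [e]eq_axiomK. Qed.
Lemma projN i j a : j != i -> proj i (existT _ j a) = None.
Proof. by rewrite /proj; case: eqP. Qed.
End Proj.

Lemma gjoinE (V : finType) (g : rel V) (H : V -> finType) (h : forall v, rel (H v)) j a a' :
  gjoin g h (existT _ j a) (existT _ j a') = h j a a'.
Proof. by rewrite /gjoin /= eqxx tagged_asE. Qed.
Lemma gjoinN (V : finType) (g : rel V) (H : V -> finType) (h : forall v, rel (H v)) j j' a a' :
  j != j' -> gjoin g h (existT _ j a) (existT _ j' a') = g j j'.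
Proof. by rewrite /gjoin /= => /negbTE ->. Qed.
Lemma upper (V : finType) (g : rel V) (H : V -> finType) (h : forall v, rel (H v))
  (b : V -> nat) : symmetric g -> (forall v, (0 < b v)%N) ->
  (forall v, exists lo hi, @mrep (H v) (h v) 'I_(b v) lo hi) ->
  box_rep (gjoin g h) #|{: {v : V & 'I_(b v)}}|.
Proof.
move=> sg bpos ex.
have ex' : forall v, exists t : (H v -> 'I_(b v) -> R) * (H v -> 'I_(b v) -> R) * R,
    @mrep (H v) (h v) 'I_(b v) t.1.1 t.1.2 /\ Rle 0 t.2 /\
    forall x k, Rle (- t.2) (t.1.1 x k) /\ Rle (t.1.2 x k) t.2.
  move=> v; have [lo [hi rp]] := ex v; have [M [M0 HM]] := mrep_bound lo hi.
  by exists (lo, hi, M).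
have FP : forall v, _ := fun v => svalP (cid (ex' v)).
pose lo (z : {j : V & H j}) (k : {v : V & 'I_(b v)}) :=
  let: existT i c := k in
  match proj i z with Some a => (sval (cid (ex' i))).1.1 a c
  | None => if g i (tag z) then Ropp (sval (cid (ex' i))).2 else Rplus (sval (cid (ex' i))).2 R1 end.
pose hi (z : {j : V & H j}) (k : {v : V & 'I_(b v)}) :=
  let: existT i c := k in
  match proj i z with Some a => (sval (cid (ex' i))).1.2 a c
  | None => Rplus (sval (cid (ex' i))).2 R1 end.
apply: (@mrep_fin _ _ _ lo hi); split.
  move=> [j a] [i c]; rewrite /lo /hi.
  have [[Rl _] [M0 _]] := FP i.
  case: (proj i _) => [a'|]; first exact: Rl.
  case: ifP => _; lra.
move=> [j a] [j' a'] xy.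
have [[Rj1 Rj2] [Mj0 Bj]] := FP j.
have [[Rj'1 Rj'2] [Mj'0 Bj']] := FP j'.
have eqall : forall P : {v : V & 'I_(b v)} -> Prop,
    (forall k, P k) <-> (forall i c, P (existT _ i c)).
  by move=> P; split => [HP i c|HP [i c]] //.
rewrite eqall.
case: (eqVneq j j') => [ejj|njj].
  subst j'; rewrite gjoinE.
  have aa : a <> a' by move=> eaa; apply: xy; rewrite eaa.
  rewrite (Rj2 _ _ aa); split.
    move=> Hc i c; rewrite /lo /hi.
    case: (eqVneq j i) => [eji|nji]; first by subst i; rewrite !projE; apply: Hc.
    rewrite !projN //=; have [[Rl _] [M0 _]] := FP i; rewrite /meetR; case: ifP => _; lra.
  by move=> Hc c; have := Hc j c; rewrite /lo /hi !projE.
rewrite gjoinN //; split.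
  move=> gjj i c; rewrite /lo /hi.
  case: (eqVneq j i) => [eji|nji].
    subst i; rewrite projE projN 1?eq_sym //= gjj; have := Rj1 a c; have := Bj a c; rewrite /meetR; lra.
  case: (eqVneq j' i) => [eji|nj'i].
    subst i; rewrite projE projN //= (sg j' j) gjj; have := Rj'1 a' c; have := Bj' a' c; rewrite /meetR; lra.
  rewrite !projN //=; have [[Rl _] [M0 _]] := FP i; rewrite /meetR.
  case: ifP => _; case: ifP => _; lra.
move=> Hc; apply/negPn/negP => ngjj.
have := Hc j (Ordinal (bpos j)); rewrite /lo /hi projE projN 1?eq_sym //= (negbTE ngjj).
have := Bj a (Ordinal (bpos j)); rewrite /meetR; lra.
Qed.
Lemma sum_disjoint (V K : finType) (C : {set V}) (J : V -> {set K}) :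
  (forall u w k, u \in C -> w \in C -> u != w -> k \in J u -> k \in J w -> False) ->
  (\sum_(v in C) #|J v| <= #|K|)%N.
Proof.
move=> dis.
have E v : #|J v| = \sum_(k : K) (if k \in J v then 1 else 0)%N.
  by rewrite -sum1_card big_mkcond.
under eq_bigr do rewrite E.
rewrite exchange_big /= -sum1_card.
apply: leq_sum => k _.
case: (pickP (fun v => (v \in C) && (k \in J v))) => [v /andP[vC kv]|none].
  rewrite (bigD1 v) //= kv big1 // => w /andP[wC wv].
  case: ifP => // kw; exfalso; apply: (dis v w k) => //; by rewrite eq_sym.
rewrite big1 // => v vC; have := none v; rewrite vC /=; by case: ifP.
Qed.

Lemma c4 (l1 h1 l2 h2 l3 h3 l4 h4 : R) :
  ~ meetR l1 h1 l2 h2 -> ~ meetR l3 h3 l4 h4 ->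
  meetR l1 h1 l3 h3 -> meetR l1 h1 l4 h4 -> meetR l2 h2 l3 h3 -> meetR l2 h2 l4 h4 -> False.
Proof.
rewrite /meetR => n1 n2 [? ?] [? ?] [? ?] [? ?].
destruct (Rle_dec l1 h2); destruct (Rle_dec l2 h1); try tauto;
destruct (Rle_dec l3 h4); destruct (Rle_dec l4 h3); try tauto; lra.
Qed.
Lemma lower (V : finType) (g : rel V) (H : V -> finType) (h : forall v, rel (H v))
  (C : {set V}) l : clique g C -> (forall v, v \in C -> ~ complete_graph (h v)) ->
  box_rep (gjoin g h) l -> (\sum_(v in C) boxicity (h v) <= l)%N.
Proof.
move=> cl nc /box_rep_mrep [lo [hi [Rl Rm]]].
pose sep v (k : 'I_l) := exists a b : H v,
  ~ meetR (lo (existT H v a) k) (hi (existT H v a) k) (lo (existT H v b) k) (hi (existT H v b) k).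
pose J v : {set 'I_l} := [set k | `[< sep v k >]].
have notall v (a b : H v) : a <> b -> ~~ h v a b -> exists k, k \in J v.
  move=> ab nh.
  have xy : existT H v a <> existT H v b.
    by move=> /eqP; rewrite -tag_eqE /tag_eq /= tagged_asE eqxx /= => /eqP.
  have : ~ forall k, meetR (lo (existT H v a) k) (hi (existT H v a) k)
                      (lo (existT H v b) k) (hi (existT H v b) k).
    by rewrite -Rm // gjoinE; apply/negP.
  move=> /Classical_Pred_Type.not_all_ex_not [k nk]; exists k.
  by rewrite inE; apply/asboolP; exists a, b.
apply: (@leq_trans (\sum_(v in C) #|J v|)); last first.
  rewrite -[X in (_ <= X)%N]card_ord; apply: sum_disjoint => u w k uC wC uw.
  rewrite !inE => /asboolP [a1 [b1 s1]] /asboolP [a2 [b2 s2]].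
  have adj x y : meetR (lo (existT H u x) k) (hi (existT H u x) k)
                       (lo (existT H w y) k) (hi (existT H w y) k).
    have := Rm (existT H u x) (existT H w y); rewrite gjoinN //.
    move=> E; apply E; last by apply: cl => // /eqP; rewrite (negbTE uw).
    by move=> [e _]; move/eqP: uw; rewrite e.
  exact: (c4 s1 s2 (adj a1 a2) (adj a1 b2) (adj b1 a2) (adj b1 b2)).
apply: leq_sum => v vC.
have [a [b [ab nh]]] : exists a b : H v, a <> b /\ ~~ h v a b.
  apply: Classical_Prop.NNPP => nex; apply: (nc v vC) => a b ab.
  apply/negPn/negP => nh; apply: nex; by exists a, b.
have [k0 k0J] := notall v a b ab nh.
apply: boxicity_le; first by apply/card_gt0P; exists k0.
apply/box_rep_mrep.
exists (fun x i => lo (existT H v x) (enum_val i)), (fun x i => hi (existT H v x) (enum_val i)).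
split=> // x y xy.
have xy' : existT H v x <> existT H v y.
  by move=> /eqP; rewrite -tag_eqE /tag_eq /= tagged_asE eqxx /= => /eqP.
rewrite -(gjoinE g) Rm //; split; first by move=> Hk i; apply: Hk.
move=> Hi; apply: Classical_Prop.NNPP => nk.
move: nk => /Classical_Pred_Type.not_all_ex_not [k nk].
have kJ : k \in J v by rewrite inE; apply/asboolP; exists x, y.
by apply: nk; have := Hi (enum_rank_in kJ k); rewrite enum_rankK_in.
Qed.
Theorem theorem3p1 (V : finType) (g : rel V) (H : V -> finType)
    (h : forall v, rel (H v)) :
  simple_graph g ->
  (forall v, simple_graph (h v)) ->
  (exists v, ~ complete_graph (h v)) ->
  (forall C : {set V}, clique g C ->
     (forall v, v \in C -> ~ complete_graph (h v)) ->
     (\sum_(v in C) boxicity (h v) <= boxicity (gjoin g h))%N) /\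
  (boxicity (gjoin g h) <= \sum_(v : V) boxicity (h v))%N.
Proof.
move=> [sg _] sh [v0 _].
have hb v : (0 < boxicity (h v))%N /\ box_rep (h v) (boxicity (h v)).
  apply: boxicity_rep; have [lo [hi rp]] := mrep_exists (proj1 (sh v)).
  by exists #|{: option (H v * H v)}|; split; [rewrite card_option | exact: mrep_fin rp].
have up := upper (b := fun v => boxicity (h v)) sg (fun v => proj1 (hb v))
  (fun v => proj1 (box_rep_mrep _ _) (proj2 (hb v))).
have card : #|{: {v : V & 'I_(boxicity (h v))}}| = (\sum_(v : V) boxicity (h v))%N.
  rewrite card_tagged sumnE big_map big_enum /=.
  by apply: eq_bigr => v _; rewrite card_ord.
rewrite card in up.
have pos : (0 < \sum_(v : V) boxicity (h v))%N.
  rewrite (bigD1 v0) //=; exact: leq_trans (proj1 (hb v0)) (leq_addr _ _).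
have le := boxicity_le pos up.
split => // C cl nc.
have [_ br] := boxicity_rep (ex_intro _ _ (conj pos up)).
exact: lower cl nc br.
Qed.
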